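(* For a threshold $h\ge0$, the AMC-$h$ policy is temporal Nash stable if and only if $h=0$.
   Context: Players: a finite set $N=\{a_1,\dots,a_n\}$. A characteristic function is $v:2^N\to\mathbb{R}_{\ge 0}$ with $v(\emptyset)=0$, monotone and bounded: $\mathsf{min}\le v(S)\le v(T)\le\mathsf{max}$ for all nonempty $S\subseteq T\subseteq N$, for fixed constants $0<\mathsf{min}\le\mathsf{max}$. Online process: an arrival order is a permutation $\pi=(\pi_1,\dots,\pi_n)$ of $N$; player $\pi_t$ arrives at time $t$; $\pi_{\prec t}$ is the set of players arriving before time $t$ and $\pi^{-1}(i)$ the arrival time of $i$. For $S\subseteq N$, $\pi_{|S}$ denotes the players of $S$ in the relative order of $\pi$. Let $C^{t-1}$ be the coalition structure of players arrived before time $t$ ($C^0=\emptyset$). At time $t$, player $\pi_t$ either joins an existing coalition $S\in C^{t-1}$ or forms $\{\pi_t\}$ (choice $S=\emptyset$); decisions are never revised. AMC-$h$ policy: when player $i$ joins coalition $S$, let $\mathsf{MC}_i=v((\pi_{\prec\pi^{-1}(i)}\cap S)\cup\{i\})-v(\pi_{\prec\pi^{-1}(i)}\cap S)$. If $\mathsf{MC}_i\le h$, all of $\mathsf{MC}_i$ is added to the share of the last player of $S$ who arrived before $i$; if $\mathsf{MC}_i>h$, that previous player additionally receives $h$ and $i$ receives $\mathsf{MC}_i-h$; if $i$ is the first player of her coalition, the ''previous player'' is $i$ herself. Shares already assigned are never reduced; $\varphi_i(S,\pi_{|S})$ is $i$'s accumulated share when the coalition is $S$. Greedy players: $\pi_t$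 chooses $S\in C^{t-1}\cup\{\emptyset\}$ maximizing $\varphi_{\pi_t}(S\cup\{\pi_t\},\pi_{|S\cup\{\pi_t\}})$ (predetermined tie-breaking). $C_g$ is the final structure; $\overline{C}_g^{t}\subseteq C_g$ is the set of final coalitions whose first-arriving member arrived at time at most $t$. Temporal Nash stability: for every $v$ and $\pi$, every $S\in C_g$ and every $i\in S$, there is no $S'\in\overline{C}_g^{\pi^{-1}(i)-1}\cup\{\emptyset\}$ with $\varphi_i(S'\cup\{i\},\pi_{|S'\cup\{i\}})>\varphi_i(S,\pi_{|S})$. *)

(* Defs.v *)
From HB Require Import structures.
From mathcomp Require Import all_boot all_order fingroup perm all_algebra.
From mathcomp Require Import reals.
Set Implicit Arguments. Unset Strict Implicit. Unset Printing Implicit Defensive.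
Import Order.TTheory GRing.Theory Num.Theory.
Local Open Scope ring_scope.

Section AMC.
Variables (R : realType) (n : nat).
Implicit Types (v : {set 'I_n} -> R) (pi : {perm 'I_n}) (S : {set 'I_n}).

(* arrival time (0-based) of player i: pi t is the player arriving at time t *)
Definition arr pi (i : 'I_n) : 'I_n := (pi^-1)%g i.

Definition is_charfun (mn mx : R) v : Prop :=
  v set0 = 0 /\
  forall S T : {set 'I_n}, S != set0 -> S \subset T ->
    mn <= v S /\ v S <= v T /\ v T <= mx.

Definition before pi S (j : 'I_n) : {set 'I_n} :=
  [set k in S | (arr pi k < arr pi j)%N].

Definition MC v pi S (j : 'I_n) : R :=
  v (before pi S j :|: [set j]) - v (before pi S j).

(* prevb S j i : i is the "previous player" of j in S: the last member of S
   arriving before j, or j herself if j is the first member of S *)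
Definition prevb pi S (j i : 'I_n) : bool :=
  if [exists k in S, (arr pi k < arr pi j)%N] then
    [&& i \in S, (arr pi i < arr pi j)%N &
        [forall k in S, (arr pi k < arr pi j)%N ==> (arr pi k <= arr pi i)%N]]
  else i == j.

Definition share v (h : R) pi S (i : 'I_n) : R :=
  \sum_(j in S)
    ((if prevb pi S j i then (if MC v pi S j <= h then MC v pi S j else h)
      else 0)
     + (if (j == i) && (h < MC v pi S j) then MC v pi S j - h else 0)).

(* one step of the online process: player p joins S (S = set0: new singleton) *)
Definition step (C : {set {set 'I_n}}) (p : 'I_n) S : {set {set 'I_n}} :=
  if S == set0 then [set p] |: C else (S :|: [set p]) |: (C :\ S).

Fixpoint build (s : seq ('I_n * {set 'I_n})) (C : {set {set 'I_n}}) :=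
  if s is (p, X) :: s' then build s' (step C p X) else C.

(* coalition structure C^t of the players arriving at times < t, given the
   choices choice t (coalition joined by the player arriving at time t) *)
Definition Cs pi (choice : 'I_n -> {set 'I_n}) (t : nat) : {set {set 'I_n}} :=
  build (take t [seq (pi k, choice k) | k <- enum 'I_n]) set0.

Definition greedy_run v (h : R) pi (choice : 'I_n -> {set 'I_n}) : Prop :=
  forall t : 'I_n,
    choice t \in Cs pi choice t :|: [set set0] /\
    forall S', S' \in Cs pi choice t :|: [set set0] ->
      share v h pi (S' :|: [set pi t]) (pi t)
        <= share v h pi (choice t :|: [set pi t]) (pi t).

(* 1-based arrival time, as in the paper *)
Definition time pi (i : 'I_n) : nat := (arr pi i).+1.

Definition Cbar pi (Cg : {set {set 'I_n}}) (t : nat) : {set {set 'I_n}} :=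
  [set S in Cg | [exists k in S,
     (time pi k <= t)%N && [forall k' in S, (arr pi k <= arr pi k')%N]]].

End AMC.

Definition TNS (R : realType) (h : R) : Prop :=
  forall (n : nat) (mn mx : R) (v : {set 'I_n} -> R) (pi : {perm 'I_n})
         (choice : 'I_n -> {set 'I_n}),
    0 < mn -> mn <= mx -> is_charfun mn mx v -> greedy_run v h pi choice ->
    forall (S : {set 'I_n}) (i : 'I_n),
      S \in Cs pi choice n -> i \in S ->
      forall S' : {set 'I_n},
        S' \in Cbar pi (Cs pi choice n) (time pi i - 1) :|: [set set0] ->
        ~ (share v h pi S i < share v h pi (S' :|: [set i]) i).

(* Main.v *)
Require Import Defs.
From HB Require Import structures.
From mathcomp Require Import all_boot all_order fingroup perm all_algebra.
From mathcomp Require Import reals.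
From mathcomp Require Import lra.
Import Order.TTheory GRing.Theory Num.Theory.
Local Open Scope ring_scope.

Section Pos.
Variables (R : realType) (n : nat) (pi : {perm 'I_n}) (choice : 'I_n -> {set 'I_n}).
Hypothesis Hch : forall t : 'I_n, choice t \in Cs pi choice t :|: [set set0].

Lemma build_rcons (s : seq ('I_n * {set 'I_n})) x C :
  build (rcons s x) C = step (build s C) x.1 x.2.
Proof. case: x => p0 X0; elim: s C => [|[p X] s IH] C /=; [by [] | exact: IH]. Qed.

Lemma Cs0 : Cs pi choice 0 = set0.
Proof. by rewrite /Cs take0. Qed.

Lemma CsS (t : 'I_n) :
  Cs pi choice t.+1 = step (Cs pi choice t) (pi t) (choice t).
Proof.
rewrite /Cs (take_nth (pi t, choice t)); last by rewrite size_map size_enum_ord.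
by rewrite build_rcons (nth_map t) ?size_enum_ord // nth_ord_enum.
Qed.

Lemma arr_pi (t : 'I_n) : arr pi (pi t) = t.
Proof. by rewrite /arr permK. Qed.

Lemma I1 t : (t <= n)%N -> forall F, F \in Cs pi choice t ->
  forall k, k \in F -> (arr pi k < t)%N.
Proof.
elim: t => [|t IH] tn F; first by rewrite Cs0 inE.
have IH' := IH (ltnW tn).
pose t' := Ordinal tn.
have := Hch t'; rewrite (CsS t') /step => HX.
case: eqP => [X0|/eqP X0].
  case/setU1P => [->|FC] k.
    by rewrite inE => /eqP ->; rewrite arr_pi.
  by move=> kF; apply: leqW; exact: IH' FC k kF.
case/setU1P => [->|]; last first.
  by move=> /setD1P [_ FC] k kF; apply: leqW; exact: IH' FC k kF.
have XC : choice t' \in Cs pi choice t'.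
  by move: HX; rewrite in_setU in_set1 (negbTE X0) orbF.
move=> k; rewrite in_setU in_set1 => /orP [kX|/eqP ->].
  by apply: leqW; exact: IH' _ XC k kX.
by rewrite arr_pi.
Qed.
Arguments I1 [t].

Lemma I2 t u : (t <= u)%N -> (u <= n)%N -> forall F, F \in Cs pi choice u ->
  [set k in F | (arr pi k < t)%N] \in Cs pi choice t :|: [set set0].
Proof.
elim: u => [|u IH] tu un F; first by rewrite Cs0 inE.
case: (eqVneq t u.+1) => [->|tu'] FC.
  have -> : [set k in F | (arr pi k < u.+1)%N] = F.
    by apply/setP => k; rewrite inE; case kF: (k \in F) => //=; exact: I1 un F FC k kF.
  by rewrite in_setU FC.
have tu2 : (t <= u)%N by rewrite -ltnS ltn_neqAle tu' tu.
have IH' := IH tu2 (ltnW un).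
pose u' := Ordinal un.
have := Hch u'; move: FC; rewrite (CsS u') /step => FC HX.
case: eqP FC => [X0|/eqP X0].
  case/setU1P => [->|FC]; last exact: IH' _ FC.
  have -> : [set k in [set pi u'] | (arr pi k < t)%N] = set0.
    apply/setP => k; rewrite !inE; case: eqP => //= ->.
    by rewrite arr_pi /= ltnNge tu2.
  by rewrite !inE eqxx orbT.
case/setU1P => [->|/setD1P [_ FC]]; last exact: IH' _ FC.
have XC : choice u' \in Cs pi choice u'.
  by move: HX; rewrite in_setU in_set1 (negbTE X0) orbF.
have -> : [set k in choice u' :|: [set pi u'] | (arr pi k < t)%N]
        = [set k in choice u' | (arr pi k < t)%N].
  apply/setP => k; rewrite !inE; case: eqP => [->|]; last by rewrite orbF.
  by rewrite arr_pi /= (ltnNge u) tu2 !andbF.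
exact: IH' _ XC.
Qed.
Arguments I2 [t u].

Lemma memX (t : 'I_n) k : k \in choice t -> (arr pi k < t)%N.
Proof.
move=> kX; have := Hch t; rewrite in_setU in_set1.
case/orP => [XC|/eqP X0]; last by rewrite X0 inE in kX.
exact: I1 (ltnW (ltn_ord t)) _ XC k kX.
Qed.

Lemma I3 i S : S \in Cs pi choice n -> i \in S ->
  before pi S i = choice (arr pi i).
Proof.
move=> SC iS; set a := arr pi i.
have := I2 (ltn_ord a) (leqnn n) _ SC.
set Z := [set k in S | _].
have iZ : i \in Z by rewrite inE iS ltnSn.
have pia : pi a = i by rewrite /a /arr permKV.
rewrite in_setU in_set1.
have -> : (Z == set0) = false by apply/negbTE/set0Pn; exists i.
rewrite orbF (CsS a) /step pia => ZC0.
have ZE : Z = choice a :|: [set i].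
  move: ZC0; case: eqP => [X0|/eqP X0].
    case/setU1P => [->|ZC]; first by rewrite X0 set0U.
    by have := I1 (ltnW (ltn_ord a)) _ ZC _ iZ; rewrite ltnn.
  case/setU1P => [//|/setD1P [_ ZC]].
  by have := I1 (ltnW (ltn_ord a)) _ ZC _ iZ; rewrite ltnn.
apply/setP => k; rewrite inE.
apply/idP/idP.
  case/andP => kS ka.
  have : k \in Z by rewrite inE kS ltnW.
  rewrite ZE in_setU in_set1 => /orP [//|/eqP ki].
  by rewrite ki ltnn in ka.
move=> kX.
have : k \in Z by rewrite ZE in_setU kX.
by rewrite inE => /andP [-> _] /=; exact: memX kX.
Qed.

End Pos.

Lemma set1_neq0 (T : finType) (x : T) : [set x] != set0.
Proof. by apply/set0Pn; exists x; rewrite set11. Qed.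

Section Share0.
Variables (R : realType) (n : nat) (pi : {perm 'I_n}) (mn mx : R) (v : {set 'I_n} -> R).
Hypothesis mn0 : 0 < mn.
Hypothesis Hv : is_charfun mn mx v.

Lemma MC_ge0 S j : 0 <= MC v pi S j.
Proof.
case: Hv => v0 Hm; rewrite /MC subr_ge0.
case: (eqVneq (before pi S j) set0) => [->|B0].
  rewrite v0 set0U; have [H _] := Hm [set j] [set j] (set1_neq0 _ j) (subxx _).
  by apply: ltW; apply: lt_le_trans H.
by have [_ [H _]] := Hm _ _ B0 (subsetUl _ [set j]).
Qed.

Lemma share0 S i : share v 0 pi S i = if i \in S then MC v pi S i else 0.
Proof.
rewrite /share.
have E : forall j, ((if prevb pi S j i then (if MC v pi S j <= 0 then MC v pi S j else 0) else 0)
     + (if (j == i) && (0 < MC v pi S j) then MC v pi S j - 0 else 0))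
     = if j == i then MC v pi S j else 0.
  move=> j; have M := MC_ge0 S j.
  have -> : (if prevb pi S j i then (if MC v pi S j <= 0 then MC v pi S j else 0) else 0) = 0.
    case: ifP => // _; case: ifP => // H; apply/eqP; rewrite eq_le H M //.
  rewrite add0r subr0; case: (j == i) => //=.
  by case: ltP => // H; apply/eqP; rewrite eq_le H M.
rewrite (eq_bigr _ (fun j _ => E j)).
case: ifP => iS.
  rewrite (bigD1 i) //= eqxx big1 ?addr0 // => j /andP [_ /negbTE ->] //.
by rewrite big1 // => j jS; case: eqP => // ji; rewrite -ji jS in iS.
Qed.

Lemma before_U1 S i : before pi (S :|: [set i]) i = before pi S i.
Proof.
apply/setP => k; rewrite !inE; case: eqP => [->|]; last by rewrite orbF.
by rewrite ltnn !andbF.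
Qed.

Lemma before_before S i : before pi (before pi S i) i = before pi S i.
Proof. by apply/setP => k; rewrite !inE; case: (_ < _)%N; rewrite ?andbT ?andbF. Qed.

Lemma share0_before (S : {set 'I_n}) (i : 'I_n) : i \in S ->
  share v 0 pi S i = share v 0 pi (before pi S i :|: [set i]) i.
Proof.
move=> iS; rewrite !share0 iS in_setU set11 orbT /MC.
by rewrite before_U1 before_before.
Qed.

End Share0.

Arguments share0_before {R n pi mn mx v}.
Arguments I2 {n pi choice}.
Arguments I3 {n pi choice}.
Lemma TNS0 (R : realType) : TNS (0 : R).
Proof.
move=> n mn mx v pi choice mn0 _ Hv Hg S i SC iS S' S'C.
have Hch : forall t : 'I_n, choice t \in Cs pi choice t :|: [set set0].
  by move=> t; case: (Hg t).
apply/negP; rewrite -leNgt.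
set a := arr pi i.
have pia : pi a = i by rewrite /a /arr permKV.
have Y : before pi S' i \in Cs pi choice a :|: [set set0].
  move: S'C; rewrite in_setU in_set1 => /orP [|/eqP ->].
    rewrite inE => /andP [S'C _].
    exact: (I2 Hch a n (ltnW (ltn_ord a)) (leqnn n) _ S'C).
  have -> : before pi set0 i = set0 by apply/setP => k; rewrite !inE.
  by rewrite in_setU set11 orbT.
have [_ G] := Hg a; have := G _ Y; rewrite pia => H.
rewrite (share0_before mn0 Hv _ _ iS) (I3 Hch i S SC iS) -/a.
rewrite (share0_before mn0 Hv (S' :|: [set i]) i); last by rewrite in_setU set11 orbT.
by rewrite before_U1.
Qed.

Definition o0 : 'I_3 := @Ordinal 3 0 isT.
Definition o1 : 'I_3 := @Ordinal 3 1 isT.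
Definition o2 : 'I_3 := @Ordinal 3 2 isT.

Lemma ord3 (k : 'I_3) : k = o0 \/ k = o1 \/ k = o2.
Proof.
case: k => [[|[|[|m]]] Hk]; [left|right;left|right;right|by []]; exact: val_inj.
Qed.

Lemma exists3 (P : pred 'I_3) : [exists k, P k] = [|| P o0, P o1 | P o2].
Proof.
apply/existsP/idP => [[k]|]; first by case: (ord3 k) => [->|[->|->]] ->; rewrite ?orbT.
by case/or3P => H; [exists o0|exists o1|exists o2].
Qed.

Lemma forall3 (P : pred 'I_3) : [forall k, P k] = [&& P o0, P o1 & P o2].
Proof.
apply/forallP/idP => [H|/and3P [H0 H1 H2] k]; first by rewrite !H.
by case: (ord3 k) => [->|[->|->]].
Qed.

Lemma arr1 (k : 'I_3) : arr 1 k = k.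
Proof. by rewrite /arr invg1 perm1. Qed.

Lemma enum3 : enum 'I_3 = [:: o0; o1; o2].
Proof. by apply: (inj_map val_inj); rewrite val_enum_ord. Qed.

Goal prevb 1 ([set o0; o2] :|: [set o1]) o2 o1 = true.
Proof.
rewrite /prevb exists3 forall3 !inE !arr1.
by [].
Qed.

Goal (o1 == o0) = false. by []. Qed.

Lemma sum3 (R : realType) (F : 'I_3 -> R) (S : {set 'I_3}) :
  \sum_(j in S) F j = (if o0 \in S then F o0 else 0) + (if o1 \in S then F o1 else 0)
                      + (if o2 \in S then F o2 else 0).
Proof.
rewrite big_mkcond /= -big_enum /= enum3 !big_cons big_nil addr0 addrA //.
Qed.


Section Neg.
Variables (R : realType) (h : R).
Hypothesis hp : 0 < h.

Definition vex (S : {set 'I_3}) : R :=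
  if [exists k, k \in S] then
    (if o0 \in S then h else h / 2) + (if (o0 \in S) && (o2 \in S) then h + h / 2 else 0)
  else 0.

Definition chx (t : 'I_3) : {set 'I_3} := if t == o2 then [set o0] else set0.

Ltac ev := rewrite /share sum3 /prevb /MC /before /vex !exists3 !forall3 !inE !arr1 /=.
Ltac fixg := match goal with
  | |- is_true (@Order.le _ _ ?x ?y) => change (x <= y)%R
  | |- is_true (@Order.lt _ _ ?x ?y) => change (x < y)%R
  | _ => idtac end.
Ltac fin := repeat match goal with |- context [if ?c then _ else _] => case: (boolP c) => /=; intro end;
  repeat match goal with
  | H : is_true (~~ (_ <= _)) |- _ => rewrite -ltNge in H
  | H : is_true (~~ (_ < _)) |- _ => rewrite -leNgt in H end;
  repeat match goal with
  | H : is_true (@Order.lt _ _ ?x ?y) |- _ => have := (H : (x < y)%R); clear H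
  | H : is_true (@Order.le _ _ ?x ?y) |- _ => have := (H : (x <= y)%R); clear H end;
  intros; lra.

Lemma E1 : share vex h 1 [set o1] o1 = h / 2.
Proof. ev; fin. Qed.
Lemma E2 : share vex h 1 ([set o0] :|: [set o1]) o1 = 0.
Proof. ev; fin. Qed.
Lemma E3 : share vex h 1 (set0 :|: [set o1]) o1 = h / 2.
Proof. ev; fin. Qed.
Lemma E4 : share vex h 1 ([set o1] :|: [set o2]) o2 = 0.
Proof. ev; fin. Qed.
Lemma E5 : share vex h 1 ([set o0] :|: [set o2]) o2 = h / 2.
Proof. ev; fin. Qed.
Lemma E6 : share vex h 1 (set0 :|: [set o2]) o2 = h / 2.
Proof. ev; fin. Qed.
Lemma E7 : share vex h 1 (([set o0] :|: [set o2]) :|: [set o1]) o1 = h.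
Proof. ev; fin. Qed.

Lemma vex_cf : is_charfun (h / 2) (h + h + h / 2) vex.
Proof.
split; first by rewrite /vex exists3 !inE.
move=> S T S0 ST.
have T0 : T != set0.
  apply: contraNneq S0 => T0; apply/eqP; apply/setP => k; rewrite inE.
  by apply/negbTE; apply/negP => /(subsetP ST); rewrite T0 inE.
have eS : [exists k, k \in S] by case/set0Pn: S0 => k kS; apply/existsP; exists k.
have eT : [exists k, k \in T] by case/set0Pn: T0 => k kS; apply/existsP; exists k.
rewrite /vex eS eT.
have hp0 := hp.
have i0 : (o0 \in S) ==> (o0 \in T) by apply/implyP => /(subsetP ST).
have i2 : (o2 \in S) ==> (o2 \in T) by apply/implyP => /(subsetP ST).
move: i0 i2.
case: (o0 \in S); case: (o0 \in T); case: (o2 \in S); case: (o2 \in T) => i0 i2;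
  move: i0 i2; cbv beta iota delta [implb andb]; move=> i0 i2; try discriminate;
  split; try split; lra.
Qed.

Lemma Cs0' : Cs 1 chx o0 = set0.
Proof. by rewrite /Cs take0. Qed.
Lemma Cs1 : Cs 1 chx o1 = [set o0] |: set0.
Proof.
rewrite /Cs enum3 /= /step !perm1 /chx /=.
by rewrite eqxx.
Qed.
Lemma Cs2 : Cs 1 chx o2 = [set o1] |: ([set o0] |: set0).
Proof.
rewrite /Cs enum3 /= /step !perm1 /chx /=.
by rewrite eqxx.
Qed.
Lemma Cs3 : Cs 1 chx 3 = ([set o0] :|: [set o2]) |: (([set o1] |: ([set o0] |: set0)) :\ [set o0]).
Proof.
rewrite /Cs enum3 /= /step !perm1 /chx /=.
by rewrite eqxx (negbTE (set1_neq0 _ o0)).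
Qed.

Lemma greedy_ex : greedy_run vex h 1 chx.
Proof.
have hp0 := hp.
move=> t; case: (ord3 t) => [->|[->|->]].
- rewrite Cs0' /chx /=; split; first by rewrite in_setU in_set1 eqxx orbT.
  by move=> S'; rewrite in_setU in_set0 in_set1 /= => /eqP ->; exact: lexx.
- rewrite Cs1 /chx /=; split; first by rewrite in_setU in_set1 eqxx orbT.
  move=> S'; rewrite !inE => /orP [/orP [/eqP ->|//]|/eqP ->]; rewrite !perm1.
    by rewrite E2 E3; lra.
  exact: lexx.
- rewrite Cs2 /chx /=; split; first by rewrite !inE eqxx !orbT.
  move=> S'; rewrite !inE => /orP [/orP [/eqP ->|/orP [/eqP ->|//]]|/eqP ->]; rewrite !perm1.
  + by rewrite E4 E5; lra.
  + exact: lexx.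
  + by rewrite E6 E5; lra.
Qed.

Lemma notTNS : ~ TNS h.
Proof.
have hp0 := hp.
move=> H.
refine (H 3%N (h/2) (h+h+h/2) vex 1%g chx _ _ vex_cf greedy_ex [set o1] o1 _ _ ([set o0] :|: [set o2]) _ _).
- lra.
- lra.
- rewrite Cs3; apply/setU1P; right; apply/setD1P; split; last by rewrite !inE eqxx.
  by apply/eqP => /setP /(_ o1); rewrite !inE eqxx.
- exact: set11.
- rewrite in_setU; apply/orP; left; rewrite inE; apply/andP; split.
    by rewrite Cs3; apply/setU1P; left.
  by rewrite /time exists3 !forall3 !inE !arr1.
- by rewrite E1 E7; lra.
Qed.

End Neg.

Theorem proposition4 (R : realType) (h : R) : 0 <= h -> (TNS h <-> h = 0).
Proof.
move=> h0; split.
  move=> T; case: (eqVneq h 0) => // hne.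
  have hp : 0 < h by rewrite lt0r hne.
  by case: (notTNS R h hp T).
by move=> ->; exact: TNS0.
Qed.
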